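(* Let $(\mathcal C,\otimes,\mathbb I)$ be a monoidal category with pushouts and $(H,\Delta,\varepsilon)$ a coalgebra in $\mathcal C$. Every global $H$-comodule, viewed as a geometric partial comodule via $\mathcal I$, is globalizable; hence $\mathcal I:\mathsf{Com}^H\to\mathsf{PCom}^H$ corestricts to a fully faithful functor $\mathcal J:\mathsf{Com}^H\to\mathsf{PCom}^H_{gl}$. Moreover, the assignment $X\mapsto Y_X$, where $(Y_X,\kappa)$ is the equalizer in $\mathsf{Com}^H$ of the pair $\rho_X\otimes H,\ (\pi_X\otimes H)\circ(X\otimes\Delta):(X\otimes H,X\otimes\Delta)\to((X\bullet H)\otimes H,(X\bullet H)\otimes\Delta)$ (which exists for every globalizable $X$), extends to a functor $\mathcal G:\mathsf{PCom}^H_{gl}\to\mathsf{Com}^H$ which is right adjoint to $\mathcal J$.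
   Context: $\mathcal C$ is treated as strict monoidal; the identity of an object $X$ is also written $X$. $\mathsf{Com}^H$ is the category of right $H$-comodules $(Y,\delta)$. A partial comodule datum is $(X,X\bullet H,\pi_X,\rho_X)$ with $\rho_X:X\to X\bullet H$ and $\pi_X:X\otimes H\to X\bullet H$ an epimorphism. For such a datum let: $(X\bullet H)\bullet H$ be the pushout of $\pi_X$ and $\rho_X\otimes H$, with coprojections $\rho_X\bullet H$ and $\pi_{X\bullet H}:(X\bullet H)\otimes H\to(X\bullet H)\bullet H$; $X\bullet(H\otimes H)$ the pushout of $\pi_X$ and $X\otimes\Delta$, with coprojections $X\bullet\Delta:X\bullet H\to X\bullet(H\otimes H)$ and $\pi_{X,\Delta}:X\otimes H\otimes H\to X\bullet(H\otimes H)$; $X\bullet(H\bullet H)$ the pushout of $\pi_{X,\Delta}$ and $\pi_X\otimes H$, with coprojections $\pi'_X:X\bullet(H\otimes H)\to X\bullet(H\bullet H)$ and $\pi'_{X,\Delta}:(X\bullet H)\otimes H\to X\bullet(H\bullet H)$. A geometric partial $H$-comodule is a datum such that (GP1) there is $X\bullet\varepsilon:X\bullet H\to X$ with $(X\bullet\varepsilon)\circ\rho_X=\mathrm{id}_X$ and $(X\bullet\varepsilon)\circ\pi_X=X\otimes\varepsilon$; (GP2) there is an isomorphism $\theta:X\bullet(H\bullet H)\to(X\bullet H)\bullet H$ with $\theta\circ\pi'_{X,\Delta}=\pi_{X\bullet H}$ and $(\rho_X\bullet H)\circ\rho_X=\theta\circ\pi'_X\circ(X\bullet\Delta)\circ\rho_X$.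 Morphisms $X\to X'$ are pairs $(f,f\bullet H)$ with $\rho_{X'}\circ f=(f\bullet H)\circ\rho_X$ and $\pi_{X'}\circ(f\otimes H)=(f\bullet H)\circ\pi_X$; category $\mathsf{PCom}^H$. A global comodule $(Y,\delta)$ gives $\mathcal I(Y)=(Y,Y\otimes H,\mathrm{id},\delta)$, and $\mathcal I:\mathsf{Com}^H\to\mathsf{PCom}^H$ is a fully faithful functor; a morphism $\mathcal I(Y)\to X$ is a $g:Y\to X$ in $\mathcal C$ with $\pi_X\circ(g\otimes H)\circ\delta=\rho_X\circ g$. A globalization of $X$ is a global comodule $(Y,\delta)$ with $p:Y\to X$ in $\mathcal C$ such that (GL1) $p$ is a morphism $\mathcal I(Y)\to X$; (GL2) $X\bullet H$ with $\rho_X,\pi_X$ is a pushout of $p$ and $(p\otimes H)\circ\delta$; (GL3) for every global $(Z,\delta')$ and morphism $q:\mathcal I(Z)\to X$ there is a unique comodule morphism $\eta:Z\to Y$ with $p\circ\eta=q$. $\mathsf{PCom}^H_{gl}$ is the full subcategory of $\mathsf{PCom}^H$ of globalizable geometric partial comodules. *)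

(* Defs.v *)
Set Implicit Arguments.
Unset Strict Implicit.

Record Category := {
  Ob :> Type;
  Hom : Ob -> Ob -> Type;
  comp : forall A B D : Ob, Hom B D -> Hom A B -> Hom A D;
  idm : forall A : Ob, Hom A A;
  comp_assoc : forall (A B D E : Ob) (f : Hom A B) (g : Hom B D) (h : Hom D E),
      comp h (comp g f) = comp (comp h g) f;
  comp_id_l : forall (A B : Ob) (f : Hom A B), comp (idm B) f = f;
  comp_id_r : forall (A B : Ob) (f : Hom A B), comp f (idm A) = f
}.

Arguments Hom {c} A B.
Arguments comp {c A B D} g f.
Arguments idm {c} A.

Declare Scope cat_scope.
Delimit Scope cat_scope with cat.
Open Scope cat_scope.
Notation "g ∘ f" := (comp g f) (at level 40, left associativity) : cat_scope.

Definition Epi {C : Category} {A B : C} (f : Hom A B) : Prop :=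
  forall (Z : C) (u v : Hom B Z), u ∘ f = v ∘ f -> u = v.

Definition IsIso {C : Category} {A B : C} (f : Hom A B) : Prop :=
  exists g : Hom B A, g ∘ f = idm A /\ f ∘ g = idm B.

Definition IsPushout {C : Category} {A B D P : C}
    (f : Hom A B) (g : Hom A D) (i1 : Hom B P) (i2 : Hom D P) : Prop :=
  i1 ∘ f = i2 ∘ g /\
  forall (Q : C) (u : Hom B Q) (v : Hom D Q), u ∘ f = v ∘ g ->
    exists h : Hom P Q, (h ∘ i1 = u /\ h ∘ i2 = v) /\
      forall h' : Hom P Q, h' ∘ i1 = u -> h' ∘ i2 = v -> h' = h.

Record Pushouts (C : Category) := {
  po : forall (A B D : C), Hom A B -> Hom A D -> C;
  po_in1 : forall (A B D : C) (f : Hom A B) (g : Hom A D), Hom B (po f g);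
  po_in2 : forall (A B D : C) (f : Hom A B) (g : Hom A D), Hom D (po f g);
  po_isPushout : forall (A B D : C) (f : Hom A B) (g : Hom A D),
      IsPushout f g (po_in1 f g) (po_in2 f g)
}.

Arguments po {C} p {A B D} f g.
Arguments po_in1 {C} p {A B D} f g.
Arguments po_in2 {C} p {A B D} f g.

(* Monoidal categories (with associator and unitors; by coherence this is
   equivalent to the paper's strict treatment)                           *)

Record Monoidal (C : Category) := {
  tens : C -> C -> C;
  tensM : forall (A B A' B' : C), Hom A B -> Hom A' B' -> Hom (tens A A') (tens B B');
  tens_id : forall (A B : C), tensM (idm A) (idm B) = idm (tens A B);
  tens_comp : forall (A B D A' B' D' : C) (f : Hom A B) (g : Hom B D)
      (f' : Hom A' B') (g' : Hom B' D'),
      tensM (g ∘ f) (g' ∘ f') = tensM g g' ∘ tensM f f';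
  unitO : C;
  assoc : forall (A B D : C), Hom (tens (tens A B) D) (tens A (tens B D));
  assoc_inv : forall (A B D : C), Hom (tens A (tens B D)) (tens (tens A B) D);
  assoc_iso1 : forall (A B D : C), assoc_inv A B D ∘ assoc A B D = idm _;
  assoc_iso2 : forall (A B D : C), assoc A B D ∘ assoc_inv A B D = idm _;
  assoc_nat : forall (A B D A' B' D' : C) (f : Hom A A') (g : Hom B B') (h : Hom D D'),
      assoc A' B' D' ∘ tensM (tensM f g) h = tensM f (tensM g h) ∘ assoc A B D;
  lunit : forall (A : C), Hom (tens unitO A) A;
  lunit_inv : forall (A : C), Hom A (tens unitO A);
  lunit_iso1 : forall (A : C), lunit_inv A ∘ lunit A = idm _;
  lunit_iso2 : forall (A : C), lunit A ∘ lunit_inv A = idm _;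
  lunit_nat : forall (A B : C) (f : Hom A B),
      lunit B ∘ tensM (idm unitO) f = f ∘ lunit A;
  runit : forall (A : C), Hom (tens A unitO) A;
  runit_inv : forall (A : C), Hom A (tens A unitO);
  runit_iso1 : forall (A : C), runit_inv A ∘ runit A = idm _;
  runit_iso2 : forall (A : C), runit A ∘ runit_inv A = idm _;
  runit_nat : forall (A B : C) (f : Hom A B),
      runit B ∘ tensM f (idm unitO) = f ∘ runit A;
  pentagon : forall (A B D E : C),
      tensM (idm A) (assoc B D E) ∘ assoc A (tens B D) E ∘ tensM (assoc A B D) (idm E)
      = assoc A B (tens D E) ∘ assoc (tens A B) D E;
  triangle : forall (A B : C),
      tensM (idm A) (lunit B) ∘ assoc A unitO B = tensM (runit A) (idm B)
}.

Arguments tens {C} m A B.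
Arguments tensM {C} m {A B A' B'} f g.
Arguments unitO {C} m.
Arguments assoc {C} m A B D.
Arguments assoc_inv {C} m A B D.
Arguments lunit {C} m A.
Arguments runit {C} m A.

Section PartialComodules.

Variables (C : Category) (M : Monoidal C) (PO : Pushouts C) (H : C)
  (Δ : Hom H (tens M H H)) (ε : Hom H (unitO M)).

Local Notation "A ⊗ B" := (tens M A B) (at level 35).
Local Notation "f ⊗m g" := (tensM M f g) (at level 35).

Definition IsCoalgebra : Prop :=
  assoc M H H H ∘ (Δ ⊗m idm H) ∘ Δ = (idm H ⊗m Δ) ∘ Δ /\
  lunit M H ∘ (ε ⊗m idm H) ∘ Δ = idm H /\
  runit M H ∘ (idm H ⊗m ε) ∘ Δ = idm H.

Record Comod := {
  cY : C;
  coact : Hom cY (cY ⊗ H);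
  coact_coassoc : assoc M cY H H ∘ (coact ⊗m idm H) ∘ coact = (idm cY ⊗m Δ) ∘ coact;
  coact_counit : runit M cY ∘ (idm cY ⊗m ε) ∘ coact = idm cY
}.

Record ComodHom (Y Y' : Comod) := {
  cf : Hom (cY Y) (cY Y');
  cf_law : coact Y' ∘ cf = (cf ⊗m idm H) ∘ coact Y
}.

Record PDatum := {
  pX : C;
  pXH : C;
  ppi : Hom (pX ⊗ H) pXH;
  prho : Hom pX pXH;
  ppi_epi : Epi ppi
}.

Section Geometric.
Variable X : PDatum.

Definition XHH : C := po PO (ppi X) (prho X ⊗m idm H).
Definition rhoH : Hom (pXH X) XHH := po_in1 PO (ppi X) (prho X ⊗m idm H).
Definition piXH : Hom (pXH X ⊗ H) XHH := po_in2 PO (ppi X) (prho X ⊗m idm H).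

Definition XdHtH : C := po PO (ppi X) (idm (pX X) ⊗m Δ).
Definition XdDelta : Hom (pXH X) XdHtH := po_in1 PO (ppi X) (idm (pX X) ⊗m Δ).
Definition piXDelta : Hom (pX X ⊗ (H ⊗ H)) XdHtH := po_in2 PO (ppi X) (idm (pX X) ⊗m Δ).

(* X•(H•H) : pushout of π_{X,Δ} (precomposed with the associator
   (X⊗H)⊗H -> X⊗(H⊗H)) and π_X ⊗ H *)
Definition XdHdH : C := po PO (piXDelta ∘ assoc M (pX X) H H) (ppi X ⊗m idm H).
Definition piX' : Hom XdHtH XdHdH :=
  po_in1 PO (piXDelta ∘ assoc M (pX X) H H) (ppi X ⊗m idm H).
Definition piXDelta' : Hom (pXH X ⊗ H) XdHdH :=
  po_in2 PO (piXDelta ∘ assoc M (pX X) H H) (ppi X ⊗m idm H).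

Definition GP1 : Prop :=
  exists e : Hom (pXH X) (pX X),
    e ∘ prho X = idm (pX X) /\ e ∘ ppi X = runit M (pX X) ∘ (idm (pX X) ⊗m ε).

Definition GP2 : Prop :=
  exists θ : Hom XdHdH XHH,
    IsIso θ /\ θ ∘ piXDelta' = piXH /\
    rhoH ∘ prho X = θ ∘ piX' ∘ XdDelta ∘ prho X.

Definition Geometric : Prop := GP1 /\ GP2.

End Geometric.

Record PHom (X X' : PDatum) := {
  pf : Hom (pX X) (pX X');
  pfH : Hom (pXH X) (pXH X');
  pf_rho : prho X' ∘ pf = pfH ∘ prho X;
  pf_pi : ppi X' ∘ (pf ⊗m idm H) = pfH ∘ ppi X
}.

Definition PHom_eq (X X' : PDatum) (f g : PHom X X') : Prop :=
  pf f = pf g /\ pfH f = pfH g.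

Lemma PHom_id_proof1 (X : PDatum) :
  prho X ∘ idm (pX X) = idm (pXH X) ∘ prho X.
Proof. rewrite comp_id_l, comp_id_r; reflexivity. Qed.

Lemma PHom_id_proof2 (X : PDatum) :
  ppi X ∘ (idm (pX X) ⊗m idm H) = idm (pXH X) ∘ ppi X.
Proof. rewrite tens_id, comp_id_l, comp_id_r; reflexivity. Qed.

Definition pid (X : PDatum) : PHom X X :=
  {| pf := idm (pX X); pfH := idm (pXH X);
     pf_rho := PHom_id_proof1 X; pf_pi := PHom_id_proof2 X |}.

Lemma pcomp_proof1 (X X' X'' : PDatum) (g : PHom X' X'') (f : PHom X X') :
  prho X'' ∘ (pf g ∘ pf f) = (pfH g ∘ pfH f) ∘ prho X.
Proof.
  rewrite comp_assoc, (pf_rho g), <- comp_assoc, (pf_rho f), comp_assoc.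
  reflexivity.
Qed.

Lemma pcomp_proof2 (X X' X'' : PDatum) (g : PHom X' X'') (f : PHom X X') :
  ppi X'' ∘ ((pf g ∘ pf f) ⊗m idm H) = (pfH g ∘ pfH f) ∘ ppi X.
Proof.
  rewrite <- (comp_id_l (idm H)).
  rewrite tens_comp, comp_assoc, (pf_pi g), <- comp_assoc, (pf_pi f), comp_assoc.
  reflexivity.
Qed.

Definition pcomp (X X' X'' : PDatum) (g : PHom X' X'') (f : PHom X X') : PHom X X'' :=
  {| pf := pf g ∘ pf f; pfH := pfH g ∘ pfH f;
     pf_rho := pcomp_proof1 g f; pf_pi := pcomp_proof2 g f |}.

Lemma idm_epi (A : C) : Epi (idm A).
Proof. intros Z u v E; rewrite !comp_id_r in E; exact E. Qed.

Definition Iobj (Y : Comod) : PDatum :=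
  {| pX := cY Y; pXH := cY Y ⊗ H; ppi := idm (cY Y ⊗ H); prho := coact Y;
     ppi_epi := @idm_epi (cY Y ⊗ H) |}.

Lemma Imor_proof2 (Y Y' : Comod) (g : ComodHom Y Y') :
  idm (cY Y' ⊗ H) ∘ (cf g ⊗m idm H) = (cf g ⊗m idm H) ∘ idm (cY Y ⊗ H).
Proof. rewrite comp_id_l, comp_id_r; reflexivity. Qed.

Definition Imor (Y Y' : Comod) (g : ComodHom Y Y') : PHom (Iobj Y) (Iobj Y') :=
  @Build_PHom (Iobj Y) (Iobj Y') (cf g) (cf g ⊗m idm H) (cf_law g) (Imor_proof2 g).

(* A morphism I(Y) -> X is a g : Y -> X with π_X ∘ (g⊗H) ∘ δ = ρ_X ∘ g *)
Definition MorIX (Y : Comod) (X : PDatum) (g : Hom (cY Y) (pX X)) : Prop :=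
  ppi X ∘ (g ⊗m idm H) ∘ coact Y = prho X ∘ g.
Arguments MorIX : clear implicits.

Definition IsGlobalization (X : PDatum) (Y : Comod) (p : Hom (cY Y) (pX X)) : Prop :=
  MorIX Y X p /\
  IsPushout p ((p ⊗m idm H) ∘ coact Y) (prho X) (ppi X) /\
  (forall (Z : Comod) (q : Hom (cY Z) (pX X)), MorIX Z X q ->
     exists η : ComodHom Z Y, p ∘ cf η = q /\
       forall η' : ComodHom Z Y, p ∘ cf η' = q -> cf η' = cf η).
Arguments IsGlobalization : clear implicits.

Definition Globalizable (X : PDatum) : Prop :=
  exists (Y : Comod) (p : Hom (cY Y) (pX X)), IsGlobalization X Y p.

Record GlObj := {
  gobj :> PDatum;
  gl_geometric : Geometric gobj;
  gl_globalizable : Globalizable gobj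
}.

(* (E, κ) is an equalizer in Com^H of u, v : (T, dT) -> S  (only the
   comodule structure dT of the source enters the universal property) *)
Definition IsComEqualizer (T S : C) (dT : Hom T (T ⊗ H)) (u v : Hom T S)
    (E : Comod) (κ : Hom (cY E) T) : Prop :=
  dT ∘ κ = (κ ⊗m idm H) ∘ coact E /\
  u ∘ κ = v ∘ κ /\
  forall (Z : Comod) (h : Hom (cY Z) T),
    dT ∘ h = (h ⊗m idm H) ∘ coact Z -> u ∘ h = v ∘ h ->
    exists η : ComodHom Z E, κ ∘ cf η = h /\
      forall η' : ComodHom Z E, κ ∘ cf η' = h -> cf η' = cf η.

Definition coactXH (X : PDatum) : Hom (pX X ⊗ H) ((pX X ⊗ H) ⊗ H) :=
  assoc_inv M (pX X) H H ∘ (idm (pX X) ⊗m Δ).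

Definition eqPair1 (X : PDatum) : Hom (pX X ⊗ H) (pXH X ⊗ H) :=
  prho X ⊗m idm H.

Definition eqPair2 (X : PDatum) : Hom (pX X ⊗ H) (pXH X ⊗ H) :=
  (ppi X ⊗m idm H) ∘ assoc_inv M (pX X) H H ∘ (idm (pX X) ⊗m Δ).

End PartialComodules.

(* Main.v *)
Require Import Defs.
From Stdlib Require Import ClassicalEpsilon.
Set Implicit Arguments.
Unset Strict Implicit.

Section S.
Variables (C : Category) (M : Monoidal C) (PO : Pushouts C) (H : C)
  (Δ : Hom H (tens M H H)) (ε : Hom H (unitO M)).
Local Notation "A ⊗ B" := (tens M A B) (at level 35).
Local Notation "f ⊗m g" := (tensM M f g) (at level 35).

Lemma tcl (A B D X : C) (f : Hom A B) (g : Hom B D) :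
  (g ∘ f) ⊗m idm X = (g ⊗m idm X) ∘ (f ⊗m idm X).
Proof. rewrite <- tens_comp, comp_id_l; reflexivity. Qed.

Lemma tcr (A B D X : C) (f : Hom A B) (g : Hom B D) :
  idm X ⊗m (g ∘ f) = (idm X ⊗m g) ∘ (idm X ⊗m f).
Proof. rewrite <- tens_comp, comp_id_l; reflexivity. Qed.

Lemma tswap (A B A' B' : C) (f : Hom A B) (g : Hom A' B') :
  (f ⊗m idm B') ∘ (idm A ⊗m g) = (idm B ⊗m g) ∘ (f ⊗m idm A').
Proof. rewrite <- !tens_comp, !comp_id_l, !comp_id_r; reflexivity. Qed.

Lemma ainv_nat (A B D A' B' D' : C) (f : Hom A A') (g : Hom B B') (h : Hom D D') :
  assoc_inv M A' B' D' ∘ (f ⊗m (g ⊗m h)) = ((f ⊗m g) ⊗m h) ∘ assoc_inv M A B D.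
Proof.
  transitivity (assoc_inv M A' B' D' ∘ (f ⊗m (g ⊗m h)) ∘ (assoc M A B D ∘ assoc_inv M A B D)).
  - rewrite assoc_iso2, comp_id_r; reflexivity.
  - rewrite comp_assoc, <- (comp_assoc (assoc M A B D) (f ⊗m (g ⊗m h))), <- assoc_nat.
    rewrite (comp_assoc _ (assoc M A' B' D')), assoc_iso1, comp_id_l; reflexivity.
Qed.

Lemma ainv_cancel (A B D X : C) (u v : Hom X (A ⊗ (B ⊗ D))) :
  assoc_inv M A B D ∘ u = assoc_inv M A B D ∘ v -> u = v.
Proof.
  intro E. rewrite <- (comp_id_l u), <- (comp_id_l v), <- (assoc_iso2 M A B D), <- !comp_assoc, E.
  reflexivity.
Qed.


Lemma ra (A B D E : C) (a : Hom D E) (b : Hom B D) (c : Hom B E) (x : Hom A B) :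
  a ∘ b = c -> a ∘ (b ∘ x) = c ∘ x.
Proof. intro h; rewrite comp_assoc, h; reflexivity. Qed.

Lemma tri_inv (A B : C) :
  (runit M A ⊗m idm B) ∘ assoc_inv M A (unitO M) B = idm A ⊗m lunit M B.
Proof. rewrite <- triangle, <- comp_assoc, assoc_iso2, comp_id_r; reflexivity. Qed.

Lemma lemK (HC : IsCoalgebra Δ ε) (A : C) :
  ((runit M A ∘ (idm A ⊗m ε)) ⊗m idm H) ∘ assoc_inv M A H H ∘ (idm A ⊗m Δ) = idm (A ⊗ H).
Proof.
  destruct HC as [_ [HL _]].
  rewrite tcl, <- !comp_assoc.
  rewrite (ra _ (eq_sym (ainv_nat (idm A) ε (idm H)))).
  rewrite <- !comp_assoc.
  rewrite (ra _ (tri_inv A H)).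
  rewrite <- !tcr, comp_assoc, HL, tens_id. reflexivity.
Qed.


Lemma cancel_lem (Z : Comod Δ ε) (W : C) (a : Hom (cY Z) W) :
  runit M W ∘ (idm W ⊗m ε) ∘ ((a ⊗m idm H) ∘ coact Z) = a.
Proof.
  rewrite <- !comp_assoc, (ra _ (eq_sym (tswap a ε))), <- !comp_assoc.
  rewrite (ra _ (runit_nat M a)), <- !comp_assoc.
  rewrite (comp_assoc (coact Z)), coact_counit, comp_id_r. reflexivity.
Qed.

Lemma cancel_coact (Z : Comod Δ ε) (W : C) (a b : Hom (cY Z) W) :
  (a ⊗m idm H) ∘ coact Z = (b ⊗m idm H) ∘ coact Z -> a = b.
Proof.
  intro E. rewrite <- (cancel_lem a), <- (cancel_lem b), E. reflexivity.
Qed.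

Lemma coactXH_nat (Z : Comod Δ ε) (A : C) (q : Hom (cY Z) A) :
  assoc_inv M A H H ∘ (idm A ⊗m Δ) ∘ ((q ⊗m idm H) ∘ coact Z)
  = (((q ⊗m idm H) ∘ coact Z) ⊗m idm H) ∘ coact Z.
Proof.
  rewrite tcl, <- !comp_assoc.
  rewrite (ra _ (eq_sym (tswap q Δ))), <- !comp_assoc.
  rewrite <- coact_coassoc.
  rewrite <- (tens_id M H H).
  rewrite !comp_assoc, ainv_nat, <- !comp_assoc.
  rewrite (ra _ (assoc_iso1 M _ _ _)), comp_id_l. reflexivity.
Qed.


Lemma eq1_k (X : PDatum M H) (Z : Comod Δ ε) (q : Hom (cY Z) (pX X)) :
  eqPair1 X ∘ ((q ⊗m idm H) ∘ coact Z) = ((prho X ∘ q) ⊗m idm H) ∘ coact Z.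
Proof. unfold eqPair1. rewrite tcl, comp_assoc. reflexivity. Qed.

Lemma eq2_k (X : PDatum M H) (Z : Comod Δ ε) (q : Hom (cY Z) (pX X)) :
  eqPair2 Δ X ∘ ((q ⊗m idm H) ∘ coact Z)
  = ((ppi X ∘ (q ⊗m idm H) ∘ coact Z) ⊗m idm H) ∘ coact Z.
Proof.
  unfold eqPair2. rewrite <- (comp_assoc (idm (pX X) ⊗m Δ)).
  rewrite <- (comp_assoc _ _ (ppi X ⊗m idm H)), coactXH_nat.
  rewrite !tcl, <- !comp_assoc. reflexivity.
Qed.

Lemma morIX_iff (X : PDatum M H) (Z : Comod Δ ε) (q : Hom (cY Z) (pX X)) :
  eqPair1 X ∘ ((q ⊗m idm H) ∘ coact Z) = eqPair2 Δ X ∘ ((q ⊗m idm H) ∘ coact Z)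
  <-> @MorIX _ _ _ Δ ε Z X q.
Proof.
  unfold MorIX. rewrite eq1_k, eq2_k. split.
  - intro E. symmetry. exact (cancel_coact E).
  - intro E. rewrite E. reflexivity.
Qed.

Lemma comod_k (Y Z : Comod Δ ε) (A : C) (p : Hom (cY Y) A) (η : ComodHom Z Y) :
  (p ⊗m idm H) ∘ coact Y ∘ cf η = ((p ∘ cf η) ⊗m idm H) ∘ coact Z.
Proof. rewrite <- comp_assoc, cf_law, tcl, comp_assoc. reflexivity. Qed.

Lemma h_decomp (HC : IsCoalgebra Δ ε) (A : C) (Z : Comod Δ ε) (h : Hom (cY Z) (A ⊗ H)) :
  assoc_inv M A H H ∘ (idm A ⊗m Δ) ∘ h = (h ⊗m idm H) ∘ coact Z ->
  ((runit M A ∘ (idm A ⊗m ε) ∘ h) ⊗m idm H) ∘ coact Z = h.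
Proof.
  intro E. rewrite tcl, <- comp_assoc, <- E, !comp_assoc, lemK; auto.
  apply comp_id_l.
Qed.

Lemma glob_eq (HC : IsCoalgebra Δ ε) (X : PDatum M H) (Y : Comod Δ ε) (p : Hom (cY Y) (pX X)) :
  @IsGlobalization _ _ _ Δ ε X Y p ->
  IsComEqualizer (coactXH Δ X) (eqPair1 X) (eqPair2 Δ X) ((p ⊗m idm H) ∘ coact Y).
Proof.
  intros [G1 [_ G3]]. split; [|split].
  - unfold coactXH. apply coactXH_nat.
  - apply morIX_iff. exact G1.
  - intros Z h Hc He.
    unfold coactXH in Hc.
    pose proof (h_decomp HC Hc) as Hd.
    set (q := runit M (pX X) ∘ (idm (pX X) ⊗m ε) ∘ h) in Hd.
    rewrite <- Hd in He. apply morIX_iff in He.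
    destruct (G3 Z q He) as [η [E1 E2]].
    exists η. split.
    + rewrite comod_k, E1. exact Hd.
    + intros η' E'. apply E2.
      rewrite comod_k in E'.
      unfold q. rewrite <- E'. symmetry. apply cancel_lem.
Qed.


Lemma po_iso (A B D P : C) (f : Hom A B) (g : Hom A D) (i1 : Hom B P) (i2 : Hom D P)
  (f' : Hom B A) :
  IsPushout f g i1 i2 -> f' ∘ f = idm A -> f ∘ f' = idm B ->
  exists j : Hom P D, j ∘ i2 = idm D /\ i2 ∘ j = idm P.
Proof.
  intros [Hc U] F1 F2.
  destruct (U D (g ∘ f') (idm D)) as [h [[h1 h2] _]].
  { rewrite <- comp_assoc, F1, comp_id_r, comp_id_l. reflexivity. }
  exists h. split; [exact h2|].
  destruct (U P i1 i2 Hc) as [k [_ Uk]].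
  transitivity k.
  - apply Uk.
    + rewrite <- comp_assoc, h1, comp_assoc, <- Hc, <- comp_assoc, F2, comp_id_r. reflexivity.
    + rewrite <- comp_assoc, h2, comp_id_r. reflexivity.
  - symmetry. apply Uk; apply comp_id_l.
Qed.

Lemma I_glob (Y : Comod Δ ε) : Globalizable Δ ε (Iobj Y).
Proof.
  exists Y, (idm (cY Y)). split; [|split].
  - unfold MorIX; cbn. rewrite tens_id, !comp_id_l, comp_id_r. reflexivity.
  - cbn. split.
    + rewrite tens_id, !comp_id_l, comp_id_r. reflexivity.
    + intros Q u v Huv. exists v. rewrite tens_id, comp_id_l, comp_id_r in Huv.
      split; [split|].
      * symmetry; exact Huv.
      * apply comp_id_r.
      * intros h' _ E. rewrite comp_id_r in E. exact E.
  - intros Z q Hq. unfold MorIX in Hq; cbn in Hq. rewrite comp_id_l in Hq.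
    exists (@Build_ComodHom _ _ _ Δ ε Z Y q (eq_sym Hq)). cbn. split.
    + apply comp_id_l.
    + intros η' E. rewrite comp_id_l in E. exact E.
Qed.

Lemma I_geo (Y : Comod Δ ε) : Geometric PO Δ ε (Iobj Y).
Proof.
  split.
  - exists (runit M (cY Y) ∘ (idm (cY Y) ⊗m ε)). cbn. split.
    + apply coact_counit.
    + apply comp_id_r.
  - unfold GP2, XHH, rhoH, piXH, XdHdH, piXDelta', piX', XdHtH, XdDelta, piXDelta.
    cbn [ppi prho pX pXH Iobj].
    pose proof (po_isPushout PO (idm ((cY Y) ⊗ H)) (coact Y ⊗m idm H)) as P1.
    set (iH := po_in2 PO (idm ((cY Y) ⊗ H)) (coact Y ⊗m idm H)) in *.
    set (rH := po_in1 PO (idm ((cY Y) ⊗ H)) (coact Y ⊗m idm H)) in *.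
    pose proof (po_isPushout PO (idm ((cY Y) ⊗ H)) (idm (cY Y) ⊗m Δ)) as P2.
    set (iD := po_in2 PO (idm ((cY Y) ⊗ H)) (idm (cY Y) ⊗m Δ)) in *.
    set (dD := po_in1 PO (idm ((cY Y) ⊗ H)) (idm (cY Y) ⊗m Δ)) in *.
    destruct (po_iso P1 (comp_id_l _) (comp_id_l _)) as [jH [jH1 jH2]].
    destruct (po_iso P2 (comp_id_l _) (comp_id_l _)) as [jD [jD1 jD2]].
    pose proof (po_isPushout PO (iD ∘ assoc M (cY Y) H H) (idm ((cY Y) ⊗ H) ⊗m idm H)) as P3.
    set (i3 := po_in2 PO (iD ∘ assoc M (cY Y) H H) (idm ((cY Y) ⊗ H) ⊗m idm H)) in *.
    set (p3 := po_in1 PO (iD ∘ assoc M (cY Y) H H) (idm ((cY Y) ⊗ H) ⊗m idm H)) in *.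
    destruct (po_iso (f' := assoc_inv M (cY Y) H H ∘ jD) P3) as [j3 [j31 j32]].
    { rewrite <- comp_assoc, (comp_assoc _ _ jD), jD1, comp_id_l, assoc_iso1. reflexivity. }
    { rewrite <- comp_assoc, (comp_assoc _ _ (assoc M (cY Y) H H)), assoc_iso2, comp_id_l, jD2.
      reflexivity. }
    exists (iH ∘ j3). split; [|split].
    + exists (i3 ∘ jH). split.
      * rewrite <- comp_assoc, (comp_assoc _ _ jH), jH1, comp_id_l. exact j32.
      * rewrite <- comp_assoc, (comp_assoc _ _ j3), j31, comp_id_l. exact jH2.
    + rewrite <- comp_assoc, j31, comp_id_r. reflexivity.
    + destruct P1 as [c1 _]. destruct P2 as [c2 _]. destruct P3 as [c3 _].
      rewrite comp_id_r in c1, c2.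
      assert (c3' : p3 ∘ (iD ∘ assoc M (cY Y) H H) = i3).
      { rewrite c3. etransitivity; [apply f_equal; apply tens_id|]. apply comp_id_r. }
      clear c3. rename c3' into c3.
      rewrite c1, c2.
      assert (E : p3 ∘ iD = i3 ∘ assoc_inv M (cY Y) H H).
      { rewrite <- (comp_id_r (p3 ∘ iD)), <- (assoc_iso2 M (cY Y) H H), !comp_assoc.
        rewrite <- (comp_assoc (assoc M (cY Y) H H) iD p3), c3. reflexivity. }
      rewrite <- !comp_assoc. rewrite (ra _ E), <- !comp_assoc.
      rewrite (ra _ j31), comp_id_l.
      rewrite <- coact_coassoc, <- !comp_assoc, (ra _ (assoc_iso1 M _ _ _)), comp_id_l.
      reflexivity.
Qed.


Lemma I_full (Y Y' : Comod Δ ε) (f : PHom (Iobj Y) (Iobj Y')) :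
  exists g : ComodHom Y Y', PHom_eq (Imor g) f.
Proof.
  pose proof (pf_pi f) as E1. pose proof (pf_rho f) as E2. cbn in E1, E2.
  rewrite comp_id_l, comp_id_r in E1.
  rewrite <- E1 in E2.
  exists (@Build_ComodHom _ _ _ Δ ε Y Y' (pf f) E2).
  split; cbn; [reflexivity | exact E1].
Qed.

Lemma morIX_comp (X X' : PDatum M H) (f : PHom X X') (Y : Comod Δ ε) (p : Hom (cY Y) (pX X)) :
  @MorIX _ _ _ Δ ε Y X p -> @MorIX _ _ _ Δ ε Y X' (pf f ∘ p).
Proof.
  unfold MorIX. intro E.
  rewrite tcl, (comp_assoc (p ⊗m idm H)), pf_pi.
  rewrite <- !comp_assoc, (comp_assoc (coact Y)), E, (comp_assoc p (prho X) (pfH f)), <- pf_rho.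
  symmetry. apply comp_assoc.
Qed.

Definition gsig (X : GlObj PO Δ ε) :
  {Y : Comod Δ ε & {p : Hom (cY Y) (pX X) | @IsGlobalization _ _ _ Δ ε X Y p}} :=
  let s := constructive_indefinite_description _ (gl_globalizable X) in
  existT _ (proj1_sig s) (constructive_indefinite_description _ (proj2_sig s)).

Definition GY (X : GlObj PO Δ ε) : Comod Δ ε := projT1 (gsig X).
Definition gp (X : GlObj PO Δ ε) : Hom (cY (GY X)) (pX X) := proj1_sig (projT2 (gsig X)).
Definition gH (X : GlObj PO Δ ε) : @IsGlobalization _ _ _ Δ ε X (GY X) (gp X) :=
  proj2_sig (projT2 (gsig X)).

Definition lift (X : GlObj PO Δ ε) (Z : Comod Δ ε) (q : Hom (cY Z) (pX X))
  (Hq : @MorIX _ _ _ Δ ε Z X q) : ComodHom Z (GY X) :=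
  proj1_sig (constructive_indefinite_description _ (proj2 (proj2 (gH X)) Z q Hq)).

Lemma lift_spec (X : GlObj PO Δ ε) (Z : Comod Δ ε) (q : Hom (cY Z) (pX X))
  (Hq : @MorIX _ _ _ Δ ε Z X q) : gp X ∘ cf (lift Hq) = q.
Proof. unfold lift. exact (proj1 (proj2_sig (constructive_indefinite_description _ (proj2 (proj2 (gH X)) Z q Hq)))). Qed.

Lemma lift_uniq (X : GlObj PO Δ ε) (Z : Comod Δ ε) (q : Hom (cY Z) (pX X))
  (Hq : @MorIX _ _ _ Δ ε Z X q) (η' : ComodHom Z (GY X)) :
  gp X ∘ cf η' = q -> cf η' = cf (lift Hq).
Proof. unfold lift. exact (proj2 (proj2_sig (constructive_indefinite_description _ (proj2 (proj2 (gH X)) Z q Hq))) η'). Qed.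

Definition Gm (X X' : GlObj PO Δ ε) (f : PHom X X') : ComodHom (GY X) (GY X') :=
  @lift X' (GY X) (pf f ∘ gp X) (morIX_comp f (proj1 (gH X))).

Lemma cu_rho (X : GlObj PO Δ ε) :
  prho X ∘ gp X = (ppi X ∘ (gp X ⊗m idm H)) ∘ prho (Iobj (GY X)).
Proof. symmetry. exact (proj1 (gH X)). Qed.

Lemma cu_pi (X : GlObj PO Δ ε) :
  ppi X ∘ (gp X ⊗m idm H) = (ppi X ∘ (gp X ⊗m idm H)) ∘ ppi (Iobj (GY X)).
Proof. symmetry. apply comp_id_r. Qed.

Definition cu (X : GlObj PO Δ ε) : PHom (Iobj (GY X)) X :=
  @Build_PHom _ _ _ (Iobj (GY X)) X (gp X) (ppi X ∘ (gp X ⊗m idm H)) (cu_rho X) (cu_pi X).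

Lemma chom_id_law (Y : Comod Δ ε) : coact Y ∘ idm (cY Y) = (idm (cY Y) ⊗m idm H) ∘ coact Y.
Proof. rewrite tens_id, comp_id_l, comp_id_r. reflexivity. Qed.

Definition chom_id (Y : Comod Δ ε) : ComodHom Y Y :=
  @Build_ComodHom _ _ _ Δ ε Y Y (idm _) (chom_id_law Y).

Lemma chom_comp_law (Y1 Y2 Y3 : Comod Δ ε) (g : ComodHom Y2 Y3) (f : ComodHom Y1 Y2) :
  coact Y3 ∘ (cf g ∘ cf f) = ((cf g ∘ cf f) ⊗m idm H) ∘ coact Y1.
Proof.
  rewrite comp_assoc, cf_law, <- comp_assoc, cf_law, tcl, comp_assoc. reflexivity.
Qed.

Definition chom_comp (Y1 Y2 Y3 : Comod Δ ε) (g : ComodHom Y2 Y3) (f : ComodHom Y1 Y2) :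
  ComodHom Y1 Y3 := @Build_ComodHom _ _ _ Δ ε Y1 Y3 _ (chom_comp_law g f).

End S.

Theorem corollary3p8 (C : Category) (M : Monoidal C) (PO : Pushouts C) (H : C)
    (Δ : Hom H (tens M H H)) (ε : Hom H (unitO M)) (HC : IsCoalgebra Δ ε) :
  (* every global comodule I(Y) is a globalizable geometric partial comodule *)
  (forall Y : Comod Δ ε, Geometric PO Δ ε (Iobj Y) /\ Globalizable Δ ε (Iobj Y))
  /\
  (* I (hence its corestriction J to PCom^H_gl, a full subcategory) is fully faithful *)
  (forall Y Y' : Comod Δ ε,
     (forall g g' : ComodHom Y Y', PHom_eq (Imor g) (Imor g') -> cf g = cf g') /\
     (forall f : PHom (Iobj Y) (Iobj Y'), exists g : ComodHom Y Y', PHom_eq (Imor g) f))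
  /\
  (* a functor G : PCom^H_gl -> Com^H with G X = Y_X the equalizer, and J ⊣ G *)
  exists (G : GlObj PO Δ ε -> Comod Δ ε)
         (Gm : forall X X' : GlObj PO Δ ε, PHom X X' -> ComodHom (G X) (G X'))
         (κ : forall X : GlObj PO Δ ε, Hom (cY (G X)) (tens M (pX X) H))
         (cu : forall X : GlObj PO Δ ε, PHom (Iobj (G X)) X),
    (forall X : GlObj PO Δ ε,
       IsComEqualizer (coactXH Δ X) (eqPair1 X) (eqPair2 Δ X) (κ X)) /\
    (forall X : GlObj PO Δ ε, cf (Gm X X (pid X)) = idm (cY (G X))) /\
    (forall (X X' X'' : GlObj PO Δ ε) (g : PHom X' X'') (f : PHom X X'),
       cf (Gm X X'' (pcomp g f)) = cf (Gm X' X'' g) ∘ cf (Gm X X' f)) /\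
    (forall (X X' : GlObj PO Δ ε) (f : PHom X X'),
       PHom_eq (pcomp (cu X') (Imor (Gm X X' f))) (pcomp f (cu X))) /\
    (forall (X : GlObj PO Δ ε) (Y : Comod Δ ε) (f : PHom (Iobj Y) X),
       exists g : ComodHom Y (G X),
         PHom_eq (pcomp (cu X) (Imor g)) f /\
         forall g' : ComodHom Y (G X), PHom_eq (pcomp (cu X) (Imor g')) f -> cf g' = cf g).
Proof.

  split; [|split].
  - intro Y. split; [apply I_geo | apply I_glob].
  - intros Y Y'. split.
    + intros g g' [E _]. exact E.
    + apply I_full.
  - exists (@GY C M PO H Δ ε), (@Gm C M PO H Δ ε),
      (fun X => tensM M (gp X) (idm H) ∘ coact (GY X)), (@cu C M PO H Δ ε).
    split; [|split; [|split; [|split]]].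
    + intro X. apply glob_eq; [exact HC | apply gH].
    + intro X. unfold Gm. symmetry. eapply lift_uniq with (η' := chom_id (GY X)).
      cbn [cf chom_id pf pid]. rewrite comp_id_l, comp_id_r. reflexivity.
    + intros X X' X'' g f. symmetry.
      unfold Gm at 1. eapply lift_uniq with (η' := chom_comp (Gm g) (Gm f)).
      unfold chom_comp, pcomp; cbn [cf pf]. unfold Gm.
      rewrite comp_assoc, lift_spec, <- comp_assoc, lift_spec, comp_assoc. reflexivity.
    + intros X X' f. unfold PHom_eq, pcomp, cu, Imor; cbn [pf pfH]. split.
      * unfold Gm. apply lift_spec.
      * cbn [pXH pX ppi prho Iobj]. rewrite <- comp_assoc, <- (tcl M H (cf (Gm f)) (gp X')). unfold Gm. rewrite lift_spec, tcl, comp_assoc, pf_pi.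
        symmetry. apply comp_assoc.
    + intros X Y f.
      assert (Hq : @MorIX _ _ _ Δ ε Y X (pf f)).
      { unfold MorIX. pose proof (pf_pi f) as E1. pose proof (pf_rho f) as E2. cbn in E1, E2.
        rewrite E1, comp_id_r, E2. reflexivity. }
      exists (lift Hq). split.
      * unfold PHom_eq, pcomp, cu, Imor; cbn [pf pfH]. split.
        -- apply lift_spec.
        -- cbn [pXH pX ppi prho Iobj]. rewrite <- comp_assoc, <- tcl, lift_spec. etransitivity; [exact (pf_pi f)|apply comp_id_r].
      * intros g' [E _]. unfold pcomp, cu, Imor in E; cbn [pf pfH] in E.
        apply lift_uniq. exact E.
Qed.
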